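(* Let $\mathcal{A}$ be an Ershov $\mathcal{C}$-algebra. If $\mathcal{A}$ is weakly equationally Noetherian, then every subset of $\mathcal{C}$ that is bounded above in $\mathcal{A}$ has a supremum in $\mathcal{A}$, and this supremum belongs to $\mathcal{C}$.
   Context: An Ershov algebra is a structure $\langle A; \vee, \wedge, \setminus, 0\rangle$ such that $\langle A;\vee,\wedge\rangle$ is a distributive lattice with least element $0$, and $b \setminus a$ is the relative complement: the unique $z$ with $z \wedge a = 0$ and $z \vee a = a \vee b$. An Ershov $\mathcal{C}$-algebra is an Ershov algebra $\mathcal{A}$ together with a distinguished subalgebra $\mathcal{C}$ whose elements are added as constant symbols; $\mathcal{L}$ is the language $\{\vee,\wedge,\setminus,0\}$ plus these constants. An equation is $t(\bar x)=s(\bar x)$ with $t,s$ terms of $\mathcal{L}$. Two systems of equations are equivalent over $\mathcal{A}$ if they have the same solution set. $\mathcal{A}$ is weakly equationally Noetherian if every system of equations (possibly infinite) in finitely many variables is equivalent over $\mathcal{A}$ to some finite system of equations of $\mathcal{L}$. *)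

(* Defs.v *)
(* An Ershov algebra is a sectionally complemented
   distributive lattice with bottom: MathComp's [cbDistrLatticeType]
   (join `|`, meet `&`, bottom \bot, relative complement / difference `\`). *)
From HB Require Import structures.
From mathcomp Require Import all_boot all_order.
From Stdlib Require List.
Set Implicit Arguments. Unset Strict Implicit. Unset Printing Implicit Defensive.
Import Order.TTheory.
Local Open Scope order_scope.

Inductive term (T : Type) (V : Type) : Type :=
  | tVar of V
  | tCst of T
  | tZero
  | tJoin of term T V & term T V
  | tMeet of term T V & term T V
  | tDiff of term T V & term T V.

Section Ershov.
Context {d : Order.disp_t} {T : cbDistrLatticeType d}.

Definition is_subalgebra (C : T -> Prop) : Prop :=
  [/\ C \bot,
      (forall x y, C x -> C y -> C (x `|` y)),
      (forall x y, C x -> C y -> C (x `&` y)) &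
      (forall x y, C x -> C y -> C (x `\` y))].

Fixpoint is_Cterm (C : T -> Prop) {V : Type} (t : term T V) : Prop :=
  match t with
  | tVar _ => True
  | tCst c => C c
  | tZero => True
  | tJoin t1 t2 | tMeet t1 t2 | tDiff t1 t2 => is_Cterm C t1 /\ is_Cterm C t2
  end.

Fixpoint eval_term {V : Type} (x : V -> T) (t : term T V) : T :=
  match t with
  | tVar v => x v
  | tCst c => c
  | tZero => \bot
  | tJoin t1 t2 => eval_term x t1 `|` eval_term x t2
  | tMeet t1 t2 => eval_term x t1 `&` eval_term x t2
  | tDiff t1 t2 => eval_term x t1 `\` eval_term x t2
  end.

Definition is_Cequation (C : T -> Prop) {V : Type} (e : term T V * term T V) :=
  is_Cterm C e.1 /\ is_Cterm C e.2.

Definition solves {V : Type} (x : V -> T) (e : term T V * term T V) : Prop :=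
  eval_term x e.1 = eval_term x e.2.

Definition weakly_eq_noetherian (C : T -> Prop) : Prop :=
  forall (n : nat) (S : term T 'I_n * term T 'I_n -> Prop),
    (forall e, S e -> is_Cequation C e) ->
    exists L : seq (term T 'I_n * term T 'I_n),
      (forall e, List.In e L -> is_Cequation C e) /\
      (forall x : 'I_n -> T,
          (forall e, S e -> solves x e) <-> (forall e, List.In e L -> solves x e)).

Definition upper_bound (X : T -> Prop) (a : T) : Prop :=
  forall c, X c -> c <= a.

Definition is_supremum (X : T -> Prop) (s : T) : Prop :=
  upper_bound X s /\ forall a, upper_bound X a -> s <= a.

End Ershov.

(* Main.v *)
Require Import Defs.
From HB Require Import structures.
From mathcomp Require Import all_boot all_order.
Local Open Scope order_scope.
Import Order.Theory.
Section A.
Context {d : Order.disp_t} {T : cbDistrLatticeType d}.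
Lemma mI (A B y : T) : (A `&` B) `&` y = (A `&` y) `&` (B `&` y).
Proof. by rewrite meetACA meetxx. Qed.
Lemma dB (a b x : T) : (a `\` b) `\` x = (a `\` x) `\` (b `\` x).
Proof. by rewrite !diffBx diffKU joinC. Qed.
Lemma F1 {V : Type} (a : T) (t : term T V) :
  eval_term (fun _ => a) t `\` a = eval_term (fun _ => \bot) t `\` a.
Proof.
elim: t => [v|c||t1 IH1 t2 IH2|t1 IH1 t2 IH2|t1 IH1 t2 IH2] /=.
- by rewrite diffxx diff0x.
- by [].
- by [].
- by rewrite !diffUx IH1 IH2.
- by rewrite !diffIx IH1 IH2.
- by rewrite dB IH1 IH2 -dB.
Qed.
Lemma mB (a b y : T) : (a `\` b) `&` y = (a `&` y) `\` (b `&` y).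
Proof. by rewrite meetBx [RHS]diffxI (diffIx a y y) diffxx meetx0 joinx0. Qed.
Lemma F2 {V : Type} (a y : T) (t : term T V) : y <= a ->
  eval_term (fun _ => y) t `&` y = eval_term (fun _ => a) t `&` y.
Proof.
move=> ya.
elim: t => [v|c||t1 IH1 t2 IH2|t1 IH1 t2 IH2|t1 IH1 t2 IH2] /=.
- rewrite meetxx. by rewrite (meet_idPr ya).
- by [].
- by [].
- by rewrite !meetUl IH1 IH2.
- by rewrite mI IH1 IH2 -mI.
- by rewrite mB IH1 IH2 -mB.
Qed.

Definition z0 {V : Type} (t : term T V) := eval_term (fun _ => (\bot : T)) t.
Definition qe {V : Type} (e : term T V * term T V) : T :=
  (z0 e.1 `\` z0 e.2) `|` (z0 e.2 `\` z0 e.1).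

Lemma Cz0 (C : T -> Prop) {V : Type} (t : term T V) :
  is_subalgebra C -> is_Cterm C t -> C (z0 t).
Proof.
case=> C0 CU CI CB; rewrite /z0.
elim: t => [v|c||t1 IH1 t2 IH2|t1 IH1 t2 IH2|t1 IH1 t2 IH2] /=; try (by []);
  move=> [h1 h2].
- exact: CU (IH1 h1) (IH2 h2).
- exact: CI (IH1 h1) (IH2 h2).
- exact: CB (IH1 h1) (IH2 h2).
Qed.

Lemma E1 {V : Type} (a : T) (e : term T V * term T V) :
  solves (fun _ => a) e -> qe e <= a.
Proof.
case: e => t s; rewrite /solves /qe /z0 /= => H.
have H1 := F1 a t; have H2 := F1 a s.
rewrite H in H1.
rewrite leUx; apply/andP; split; rewrite -diff_eq0 dB -H1 H2 diffxx //.
Qed.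

Lemma E2 {V : Type} (a y : T) (e : term T V * term T V) :
  qe e <= y -> y <= a -> solves (fun _ => a) e -> solves (fun _ => y) e.
Proof.
case: e => t s; rewrite /solves /qe /z0 /= => Hq ya H.
set ty := eval_term (fun _ => y) t. set sy := eval_term (fun _ => y) s.
rewrite -(joinIB y ty) -(joinIB y sy).
rewrite /ty /sy (@F2 V a y t ya) (@F2 V a y s ya) H (F1 y t) (F1 y s).
congr (_ `|` _).
move: Hq; rewrite leUx => /andP[h1 h2].
rewrite leBLR in h1; rewrite leBLR in h2.
apply: le_anti; apply/andP; split.
- by rewrite -(joinBK y (eval_term (fun=> \bot) s)); exact: leBl h1.
- by rewrite -(joinBK y (eval_term (fun=> \bot) t)); exact: leBl h2.
Qed.

Definition QL {V : Type} (L : seq (term T V * term T V)) : T :=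
  foldr (fun e acc => qe e `|` acc) \bot L.

Lemma LQ1 (C : T -> Prop) {V : Type} (L : seq (term T V * term T V)) :
  is_subalgebra C -> (forall e, List.In e L -> is_Cequation C e) -> C (QL L).
Proof.
move=> Hs; have [C0 CU CI CB] := Hs.
elim: L => [|e L IH] HL /=; first exact: C0.
apply: (CU); last by apply: IH => e' h; apply: HL; right.
have [h1 h2] := HL e (or_introl erefl).
by rewrite /qe; apply: (CU); apply: (CB); apply: Cz0.
Qed.

Lemma LQ2 {V : Type} (L : seq (term T V * term T V)) (a : T) :
  (forall e, List.In e L -> solves (fun _ => a) e) -> QL L <= a.
Proof.
elim: L => [|e L IH] HL /=; first exact: le0x.
rewrite leUx; apply/andP; split.
- by apply: E1; apply: HL; left.
- by apply: IH => e' h; apply: HL; right.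
Qed.

Lemma LQ3 {V : Type} (L : seq (term T V * term T V)) (a y : T) :
  QL L <= y -> y <= a -> (forall e, List.In e L -> solves (fun _ => a) e) ->
  forall e, List.In e L -> solves (fun _ => y) e.
Proof.
elim: L => [|e L IH] /= Hq ya HL e' //.
move: Hq; rewrite leUx => /andP[h1 h2] [<-|h].
- exact: (@E2 V a y e h1 ya (HL e (or_introl erefl))).
- by apply: (IH h2 ya) => // e'' h'; apply: HL; right.
Qed.
End A.

Theorem mainTheorem7 (d : Order.disp_t) (T : cbDistrLatticeType d)
    (C : T -> Prop) :
  is_subalgebra C ->
  weakly_eq_noetherian C ->
  forall X : T -> Prop,
    (forall c, X c -> C c) ->
    (exists a : T, upper_bound X a) ->
    exists s : T, is_supremum X s /\ C s.
Proof.
move=> Hsub Hw X XC [a0 Ha0].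
pose S := fun e : term T 'I_1 * term T 'I_1 =>
  exists c, X c /\ e = (tMeet (tCst 'I_1 c) (tVar T ord0), tCst 'I_1 c).
have HS : forall e, S e -> is_Cequation C e.
  by move=> e [c [Xc ->]]; split; [split|]; rewrite //=; apply: XC.
have [L [HL HLeq]] := Hw 1 S HS.
have key : forall a, upper_bound X a <->
    (forall e, List.In e L -> solves (fun _ => a) e).
  move=> a; rewrite -HLeq; split.
  - by move=> ub e [c [Xc ->]]; rewrite /solves /=; apply/meet_idPl/ub.
  - move=> h c Xc; apply/meet_idPl.
    exact: (h _ (ex_intro _ c (conj Xc erefl))).
have h0 := proj1 (key a0) Ha0.
exists (QL L); split; [split|].
- apply/key; exact: (LQ3 L a0 (QL L) (le_refl _) (LQ2 L a0 h0) h0).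
- by move=> u /key; apply: LQ2.
- exact: LQ1.
Qed.
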